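(* Let $V$ be a finite set, $C=(C_R)_{R\subseteq V}$ non-negative capacities and $D=(D_S)_{S\subseteq V}$ non-negative demands. Then \[ \mathrm{MinHypCut}(V,C,D)=\min_{\delta\in\Delta_1(V)}\frac{C\cdot\delta}{D\cdot\delta}, \] where $\Delta_1(V)$ is the set of all $\ell_1$-embeddable diversities on $V$.
   Context: A diversity on $V$ is a function $\delta$ from subsets of $V$ to $\mathbb{R}$ with $\delta(A)\ge 0$, $\delta(A)=0$ whenever $|A|\le 1$ (values $0$ on larger sets are allowed), and $\delta(A\cup B)+\delta(B\cup C)\ge\delta(A\cup C)$ whenever $B\neq\emptyset$. Write $C\cdot\delta=\sum_{R\subseteq V}C_R\delta(R)$ and $D\cdot\delta=\sum_{S\subseteq V}D_S\delta(S)$; quotients are considered only where the denominator is nonzero. The $\ell_1^m$ diversity is $(\mathbb{R}^m,\delta_1)$ with $\delta_1(A)=\sum_{i=1}^m\max\{|a_i-b_i|:a,b\in A\}$; a diversity $\delta$ on $V$ is $\ell_1$-embeddable if there are $m$ and $\phi:V\to\mathbb{R}^m$ with $\delta(A)=\delta_1(\phi(A))$ for all $A\subseteq V$. For $U\subseteq V$ let $\partial U$ be the set of subsets of $V$ meeting both $U$ and $V\setminus U$, and $\mathrm{MinHypCut}(V,C,D)=\min_{U\subseteq V}\frac{\sum_{A\in\partial U}C_A}{\sum_{S\in\partial U}D_S}$. *)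

(* Defs.v *)
From HB Require Import structures.
From mathcomp Require Import all_boot all_order all_algebra.
From mathcomp Require Import reals.
Set Implicit Arguments. Unset Strict Implicit. Unset Printing Implicit Defensive.
Import Order.TTheory GRing.Theory Num.Theory.
Local Open Scope ring_scope.

Section Defs.
Variables (R : realType) (V : finType).

Definition is_diversity (delta : {set V} -> R) : Prop :=
  [/\ forall A : {set V}, 0 <= delta A,
      forall A : {set V}, (#|A| <= 1)%N -> delta A = 0 &
      forall A B C : {set V}, B != set0 -> delta (A :|: C) <= delta (A :|: B) + delta (B :|: C)].

(* The l1^m diversity of the image phi(A) of A under phi : V -> R^m:
   sum_i max_{a,b in A} |phi a i - phi b i| (0 for empty A). *)
Definition l1_div_image (m : nat) (phi : V -> 'I_m -> R) (A : {set V}) : R :=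
  \sum_(i < m) \big[Num.max/0]_(a in A) \big[Num.max/0]_(b in A) `|phi a i - phi b i|.

Definition l1_embeddable (delta : {set V} -> R) : Prop :=
  exists (m : nat) (phi : V -> 'I_m -> R), forall A : {set V}, delta A = l1_div_image phi A.

Definition dotp (C delta : {set V} -> R) : R := \sum_(S : {set V}) C S * delta S.

Definition in_boundary (U A : {set V}) : bool :=
  (A :&: U != set0) && (A :\: U != set0).

Definition cut_cap (C : {set V} -> R) (U : {set V}) : R :=
  \sum_(A : {set V} | in_boundary U A) C A.

Definition cut_ratio_value (C D : {set V} -> R) (r : R) : Prop :=
  exists U : {set V}, cut_cap D U != 0 /\ r = cut_cap C U / cut_cap D U.

Definition l1_ratio_value (C D : {set V} -> R) (r : R) : Prop :=
  exists delta : {set V} -> R,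
    [/\ is_diversity delta, l1_embeddable delta, dotp D delta != 0 &
        r = dotp C delta / dotp D delta].

End Defs.

Definition is_min (R : realType) (P : R -> Prop) (m : R) : Prop :=
  P m /\ forall r, P r -> m <= r.

Definition is_MinHypCut (R : realType) (V : finType) (C D : {set V} -> R) (m : R) :=
  is_min (cut_ratio_value C D) m.

(* Main.v *)
Require Import Defs.
From HB Require Import structures.
From mathcomp Require Import all_boot all_order all_algebra.
From mathcomp Require Import reals.
From mathcomp Require Import lra.
Import Order.TTheory GRing.Theory Num.Theory.
Local Open Scope ring_scope.
Set Implicit Arguments. Unset Strict Implicit. Unset Printing Implicit Defensive.

Section S.
Variables (R : realType) (V : finType).

Lemma exists_min (I : finType) (P : pred I) (F : I -> R) (i0 : I) : P i0 ->
  exists2 i, P i & forall j, P j -> F i <= F j.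
Proof.
move=> Pi0; case: (arg_minP F Pi0) => i Pi H; exists i => // j Pj; exact: H.
Qed.

Lemma exists_max (I : finType) (P : pred I) (F : I -> R) (i0 : I) : P i0 ->
  exists2 i, P i & forall j, P j -> F j <= F i.
Proof.
move=> Pi0; case: (arg_maxP F Pi0) => i Pi H; exists i => // j Pj; exact: H.
Qed.

Definition d1 (f : V -> R) (A : {set V}) : R :=
  \big[Num.max/0]_(a in A) \big[Num.max/0]_(b in A) `|f a - f b|.

Lemma d1_eq f (A : {set V}) a1 a2 : a1 \in A -> a2 \in A ->
  (forall x, x \in A -> f a2 <= f x <= f a1) -> d1 f A = f a1 - f a2.
Proof.
move=> A1 A2 H; apply/eqP; rewrite eq_le; apply/andP; split.
  apply: bigmax_le; first by rewrite subr_ge0; case/andP: (H _ A1).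
  move=> a Aa; apply: bigmax_le; first by rewrite subr_ge0; case/andP: (H _ A1).
  move=> b Ab; case/andP: (H _ Aa) => h1 h2; case/andP: (H _ Ab) => h3 h4.
  rewrite ler_norml; apply/andP; split; lra.
apply: (bigmax_sup a1) => //; apply: (bigmax_sup a2) => //.
by rewrite ger0_norm // subr_ge0; case/andP: (H _ A1).
Qed.

Lemma d1_const f (A : {set V}) : (forall a b, a \in A -> b \in A -> f a = f b) -> d1 f A = 0.
Proof.
move=> H; apply: (big_ind (fun x => x = 0)) => //; first by move=> x y -> ->; rewrite maxxx.
move=> a Aa; apply: (big_ind (fun x => x = 0)) => //; first by move=> x y -> ->; rewrite maxxx.
by move=> b Ab; rewrite (H a b Aa Ab) subrr normr0.
Qed.


Lemma minle (a b t : R) : a <= b -> Num.min a t <= Num.min b t.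
Proof. by rewrite !minEle; case: (leP a t); case: (leP b t) => *; lra. Qed.
Lemma min_l (a t : R) : a <= t -> Num.min a t = a.
Proof. by rewrite minEle => ->. Qed.
Lemma min_r (a t : R) : t <= a -> Num.min a t = t.
Proof. move=> h; rewrite minEle; case: (leP a t) => h2 //; apply/eqP; by rewrite eq_le h h2. Qed.

Definition cutd (U A : {set V}) : R := (in_boundary U A)%:R.

Lemma cut_capE (X : {set V} -> R) U : cut_cap X U = dotp X (cutd U).
Proof.
rewrite /cut_cap /dotp big_mkcond; apply: eq_bigr => A _ /=.
by rewrite /cutd; case: (in_boundary U A); rewrite ?mulr1 ?mulr0.
Qed.

Lemma dotp_lin (X d e : {set V} -> R) w :
  dotp X (fun A => d A + w * e A) = dotp X d + w * dotp X e.
Proof.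
rewrite /dotp mulr_sumr -big_split; apply: eq_bigr => A _ /=. by rewrite mulrDr mulrCA.
Qed.

Lemma dotp0 (X d : {set V} -> R) : (forall A, d A = 0) -> dotp X d = 0.
Proof. by move=> H; rewrite /dotp big1 // => A _; rewrite H mulr0. Qed.

Lemma key_ineq (X Y : {set V} -> R) (c : R) :
  (forall U, c * cut_cap Y U <= cut_cap X U) ->
  forall f, c * dotp Y (d1 f) <= dotp X (d1 f).
Proof.
move=> HU f.
have [n] := ubnP #|[set x | [exists y, f x < f y]]|.
elim: n f => [//|n IH] f Hlt.
set N := [set x | [exists y, f x < f y]] in Hlt.
have inN x : (x \in N) = [exists y, f x < f y] by rewrite inE.
case: (set_0Vmem N) => [N0 | [x0 Nx0]].
  have fc a b : f a <= f b.
    case: leP => // hlt; have : b \in N by rewrite inN; apply/existsP; exists a.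
    by rewrite N0 inE.
  by rewrite !dotp0 ?mulr0 // => A; apply: d1_const => a b _ _;
    apply/eqP; rewrite eq_le !fc.
have [x1 Nx1 Hx1] := exists_max (fun x => f x) Nx0.
have [z _ Hz] := exists_max (fun x => f x) (P := predT) (isT : predT x0).
set t := f x1.
have {}Nx1 : x1 \in N := Nx1.
have fN x : x \in N -> f x <= t by move=> h; exact: Hx1.
have fnN x : x \notin N -> f x = f z.
  move=> h; apply/eqP; rewrite eq_le Hz //=.
  case: leP => // hlt; move: h; rewrite inN; case/negP; apply/existsP; by exists z.
have tz : t < f z.
  move: (Nx1); rewrite inN => /existsP [y hy]; apply: (lt_le_trans hy); exact: Hz.
pose g x := Num.min (f x) t.
have key A : d1 f A = d1 g A + (f z - t) * cutd N A.
  case: (set_0Vmem A) => [-> | [a Aa]].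
    rewrite /d1 !big_set0 /cutd /in_boundary set0I eqxx /=; by rewrite mulr0 addr0.
  have [a1 A1 H1] := exists_max (fun x => f x) Aa.
  have [a2 A2 H2] := exists_min (fun x => f x) Aa.
  have {}A1 : a1 \in A := A1. have {}A2 : a2 \in A := A2.
  have Hf x : x \in A -> f a2 <= f x <= f a1 by move=> h; rewrite H1 ?H2.
  rewrite (d1_eq A1 A2 Hf) (@d1_eq g A a1 a2 A1 A2); last first.
    by move=> x /Hf /andP [h1 h2]; rewrite !minle.
  rewrite /g /cutd /in_boundary.
  case: (boolP (a1 \in N)) => N1; case: (boolP (a2 \in N)) => N2.
  - have -> : A :\: N == set0.
      apply/eqP/setP => x; rewrite in_set0 in_setD; apply/negP => /andP [xN xA].
      have := fnN _ xN; have := Hf _ xA; have := fN _ N1; lra.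
    by rewrite andbF mulr0 addr0 !min_l ?fN.
  - have := fnN _ N2; have := fN _ N1; have := Hf _ A1; lra.
  - have -> : A :&: N != set0 by apply/set0Pn; exists a2; rewrite in_setI A2 N2.
    have -> : A :\: N != set0 by apply/set0Pn; exists a1; rewrite in_setD A1 N1.
    rewrite /= mulr1 (fnN _ N1) min_r; last lra.
    rewrite min_l; [lra | exact: fN].
  - have -> : A :&: N == set0.
      apply/eqP/setP => x; rewrite in_set0 in_setI; apply/negP => /andP [xA xN].
      have := fnN _ N2; have := Hf _ xA; have := fN _ xN; lra.
    rewrite /= mulr0 addr0 !min_r ?fnN //; lra.
have IHg := IH g.
have Hg : c * dotp Y (d1 g) <= dotp X (d1 g).
  apply: IHg; rewrite -ltnS; apply: leq_trans Hlt; apply: proper_card.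
  apply/properP; split.
    apply/subsetP => x; rewrite !inE => /existsP [y hy]; apply/existsP; exists y.
    case: ltP => // hyx; move: hy; rewrite ltNge minle //.
  exists x1 => //; rewrite inE; apply/negP => /existsP [y].
  by rewrite /g (@min_r (f x1) t) ?lexx // lt_min ltxx andbF.
have E (W : {set V} -> R) : dotp W (d1 f) = dotp W (d1 g) + (f z - t) * cut_cap W N.
  by rewrite cut_capE -dotp_lin; apply: eq_bigr => A _; rewrite key.
rewrite !E; have := HU N; have : 0 <= f z - t by lra. nra.
Qed.

Lemma l1E (m : nat) (phi : V -> 'I_m -> R) A :
  l1_div_image phi A = \sum_(i < m) d1 (fun x => phi x i) A.
Proof. by []. Qed.

Lemma key_l1 (X Y : {set V} -> R) (c : R) :
  (forall U, c * cut_cap Y U <= cut_cap X U) ->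
  forall m (phi : V -> 'I_m -> R),
  c * dotp Y (l1_div_image phi) <= dotp X (l1_div_image phi).
Proof.
move=> HU m phi.
have E (W : {set V} -> R) : dotp W (l1_div_image phi) = \sum_(i < m) dotp W (d1 (fun x => phi x i)).
  rewrite /dotp (eq_bigr (fun S => \sum_(i < m) W S * d1 (fun x => phi x i) S)).
    by rewrite exchange_big.
  by move=> S _; rewrite l1E mulr_sumr.
rewrite !E mulr_sumr; apply: ler_sum => i _; exact: key_ineq.
Qed.

Lemma cutd_div U : is_diversity (cutd U).
Proof.
split.
- by move=> A; rewrite /cutd ler0n.
- move=> A hA; rewrite /cutd /in_boundary.
  case: (boolP (A :&: U != set0)) => //= /set0Pn [x]; rewrite in_setI => /andP [xA xU].
  case: (boolP (A :\: U != set0)) => //= /set0Pn [y]; rewrite in_setD => /andP [yU yA].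
  have xy : x != y by apply/eqP => e; move: yU; rewrite -e xU.
  have sub : [set x; y] \subset A.
    by apply/subsetP => w; rewrite !inE => /orP [/eqP -> | /eqP ->].
  have := subset_leq_card sub; rewrite cards2 xy => h.
  by have := leq_trans h hA.
- move=> A B C /set0Pn [b bB].
  suff : in_boundary U (A :|: C) -> in_boundary U (A :|: B) || in_boundary U (B :|: C).
    rewrite /cutd; case: (in_boundary U (A :|: C)); case: (in_boundary U (A :|: B));
      case: (in_boundary U (B :|: C)) => H; rewrite ?(mulr1n, mulr0n);
      try lra; by have := H isT.
  rewrite /in_boundary => /andP [/set0Pn [u] /[!in_setI] /andP [uAC uU]
                                 /set0Pn [v] /[!in_setD] /andP [vU vAC]].
  have ne1 (W : {set V}) w : w \in W -> w \in U -> W :&: U != set0.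
    by move=> h1 h2; apply/set0Pn; exists w; rewrite in_setI h1 h2.
  have ne2 (W : {set V}) w : w \in W -> w \notin U -> W :\: U != set0.
    by move=> h1 h2; apply/set0Pn; exists w; rewrite in_setD h1 h2.
  move: uAC vAC; rewrite !in_setU => /orP [uA | uC] /orP [vA | vC].
  + by rewrite (ne1 _ u) ?in_setU ?uA // (ne2 _ v) ?in_setU ?vA.
  + case: (boolP (b \in U)) => bU.
    * by rewrite orbC (ne1 _ b) ?in_setU ?bB // (ne2 _ v) ?in_setU ?vC ?orbT.
    * by rewrite (ne1 _ u) ?in_setU ?uA // (ne2 _ b) ?in_setU ?bB ?orbT.
  + case: (boolP (b \in U)) => bU.
    * by rewrite (ne1 _ b) ?in_setU ?bB ?orbT // (ne2 _ v) ?in_setU ?vA.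
    * by rewrite orbC (ne1 _ u) ?in_setU ?uC ?orbT // (ne2 _ b) ?in_setU ?bB.
  + by rewrite orbC (ne1 _ u) ?in_setU ?uC ?orbT // (ne2 _ v) ?in_setU ?vC ?orbT.
Qed.

Lemma cutd_emb U : l1_embeddable (cutd U).
Proof.
exists 1%N, (fun x _ => (x \in U)%:R) => A; rewrite l1E big_ord1 /cutd /in_boundary.
case: (boolP (A :&: U != set0)) => /= [/set0Pn [x] | h1].
  rewrite in_setI => /andP [xA xU].
  case: (boolP (A :\: U != set0)) => /= [/set0Pn [y] | h2].
    rewrite in_setD => /andP [yU yA].
    rewrite (@d1_eq _ A x y xA yA) ?xU ?(negbTE yU) ?subr0 //.
    by move=> w _; case: (w \in U); rewrite ?ler01 ?lexx.
  rewrite d1_const // => a b aA bA; move: h2; rewrite negbK => /eqP /setP h2.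
  have := h2 a; have := h2 b; rewrite !in_set0 !in_setD aA bA !andbT.
  by move/negbFE => -> /negbFE ->.
rewrite d1_const // => a b aA bA; move: h1; rewrite negbK => /eqP /setP h1.
have := h1 a; have := h1 b; rewrite !in_set0 !in_setI aA bA /=.
by move=> -> ->.
Qed.

End S.

Unset Implicit Arguments.

Theorem proposition17 (R : realType) (V : finType) (C D : {set V} -> R)
  (hC : forall S : {set V}, 0 <= C S) (hD : forall S : {set V}, 0 <= D S) :
  forall m : R, is_MinHypCut C D m <-> is_min (l1_ratio_value C D) m.
Proof.
have capge0 (X : {set V} -> R) U : (forall S, 0 <= X S) -> 0 <= cut_cap X U.
  by move=> h; apply: sumr_ge0 => S _.
have Pcut U : cut_cap D U != 0 -> l1_ratio_value C D (cut_cap C U / cut_cap D U).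
  move=> h; exists (@cutd R V U); split; [exact: cutd_div | exact: cutd_emb | | ];
  by rewrite -?cut_capE.
have lower m : (forall r, cut_ratio_value C D r -> m <= r) ->
    forall r, l1_ratio_value C D r -> m <= r.
  move=> hm r [delta [hdiv [k [phi hphi]] hne ->]].
  have HU U : m * cut_cap D U <= cut_cap C U.
    case: (eqVneq (cut_cap D U) 0) => [-> | h]; first by rewrite mulr0 capge0.
    have pos : 0 < cut_cap D U by rewrite lt_def h capge0.
    by rewrite -ler_pdivlMr //; apply: hm; exists U.
  have dE (X : {set V} -> R) : dotp X delta = dotp X (l1_div_image phi).
    by apply: eq_bigr => S _; rewrite hphi.
  have pos : 0 < dotp D delta.
    rewrite lt_def hne /=; apply: sumr_ge0 => S _; apply: mulr_ge0 => //.
    by case: hdiv.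
  rewrite ler_pdivlMr // !dE; exact: key_l1.
move=> m; split.
  move=> [[U [hU ->]] lb]; split; first exact: Pcut.
  exact: lower.
move=> [Qm lbQ].
have [U0 hU0] : exists U, cut_cap D U != 0.
  move: Qm => [delta [hdiv [k [phi hphi]] hne _]].
  case: (boolP [exists U, cut_cap D U != 0]) => [/existsP //| /existsPn hall].
  exfalso; move/eqP: hne; apply.
  have dE (X : {set V} -> R) : dotp X delta = dotp X (l1_div_image phi).
    by apply: eq_bigr => S _; rewrite hphi.
  have HU U : 1 * cut_cap D U <= cut_cap (fun _ => 0) U.
    have := hall U; rewrite negbK => /eqP ->; rewrite mulr0.
    by rewrite /cut_cap big1.
  have := key_l1 HU phi; rewrite mul1r -!dE => h1.
  have h2 : dotp (fun _ => 0) delta = 0 by rewrite /dotp big1 // => S _; rewrite mul0r.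
  apply/eqP; rewrite eq_le; rewrite -h2 h1 /=.
  rewrite h2; apply: sumr_ge0 => S _; apply: mulr_ge0 => //; by case: hdiv.
have [U1 hU1 minU1] := exists_min (fun U => cut_cap C U / cut_cap D U)
   (P := fun U => cut_cap D U != 0) hU0.
have PU1 : cut_ratio_value C D (cut_cap C U1 / cut_cap D U1) by exists U1.
have lbP r : cut_ratio_value C D r -> cut_cap C U1 / cut_cap D U1 <= r.
  by move=> [U [hU ->]]; exact: minU1.
have e : m = cut_cap C U1 / cut_cap D U1.
  apply/eqP; rewrite eq_le; apply/andP; split.
    by apply: lbQ; apply: Pcut.
  by apply: (lower _ lbP).
by split; [rewrite e | move=> r hr; rewrite e; exact: lbP].
Qed.
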